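(* There is an absolute constant $c>0$ such that for every $\delta'\in(0,1)$, with probability at least $1-4\delta'$ over the draw of $\mathcal D$, any SBEED output $(\hat V,\hat\pi)$ satisfies $$\|\hat V-\mathcal C^{\hat\pi}_\lambda\hat V\|_{2,\mu}\le c\left(\sqrt{\frac{\jmath}{n}}+\sqrt{\epsilon_{\mathcal V,\mathcal P}}+\sqrt[4]{\frac{\jmath}{n}\epsilon_{\mathcal V,\mathcal P}}+\sqrt{\epsilon_{\mathcal G,\mathcal V,\mathcal P}}+\sqrt[4]{\frac{\iota}{n}\epsilon_{\mathcal G,\mathcal V,\mathcal P}}+\sqrt{\frac{\iota}{n}}\right),$$ where $\iota=V_{\lambda,\max}^2\ln\frac{|\mathcal V||\mathcal P||\mathcal G|}{\delta'}$ and $\jmath=V_{\lambda,\max}^2\ln\frac{|\mathcal V||\mathcal P|}{\delta'}$.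
   Context: Finite MDP with state space $\mathcal S$, action space $\mathcal A$, discount $\gamma\in[0,1)$, kernel $P$, reward $R:\mathcal S\times\mathcal A\to[0,R_{\max}]$; $\lambda>0$. $(\mathbb PV)(s,a)=\sum_{s'}P(s'\mid s,a)V(s')$; $(\mathcal C^\pi_\lambda V)(s,a)=R(s,a)+\gamma(\mathbb PV)(s,a)-\lambda\ln\pi(a\mid s)$. $\mu\in\Delta(\mathcal S\times\mathcal A)$, $\|f\|^2_{2,\mu}=\mathbb E_{\mu}[f(s,a)^2]$ (for $V$ depending only on $s$, $V-\mathcal C^\pi_\lambda V$ is $(s,a)\mapsto V(s)-(\mathcal C^\pi_\lambda V)(s,a)$). $V_{\lambda,\max}=(R_{\max}+\lambda\ln|\mathcal A|)/(1-\gamma)$. Finite classes $\mathcal V\subset[0,V_{\lambda,\max}]^{\mathcal S}$, $\mathcal P\subset\{\pi:\|\ln\pi\|_\infty\le V_{\lambda,\max}/\lambda\}$, $\mathcal G\subset[0,2V_{\lambda,\max}]^{\mathcal S\times\mathcal A}$. Dataset $\mathcal D=\{(s_i,a_i,r_i,s_i')\}_{i=1}^n$ with $(s_i,a_i)$ i.i.d. from $\mu$, $r_i=R(s_i,a_i)$, $s_i'\sim P(\cdot\mid s_i,a_i)$ independently. $\mathscr L_{\mathcal D}(V;V,\pi)=\frac1n\sum_i\big(V(s_i)-r_i-\gamma V(s_i')+\lambda\ln\pi(a_i\mid s_i)\big)^2$, $\mathscr R_{\mathcal D}(g;V,\pi)=\frac1n\sum_i\big(g(s_i,a_i)-r_i-\gamma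 V(s_i')+\lambda\ln\pi(a_i\mid s_i)\big)^2$. SBEED output: $(\hat V,\hat\pi)\in\arg\min_{V\in\mathcal V,\pi\in\mathcal P}\max_{g\in\mathcal G}\big[\mathscr L_{\mathcal D}(V;V,\pi)-\mathscr R_{\mathcal D}(g;V,\pi)\big]$. $\epsilon_{\mathcal V,\mathcal P}=\min_{V\in\mathcal V,\pi\in\mathcal P}\|V-\mathcal C^\pi_\lambda V\|^2_{2,\mu}$, $\epsilon_{\mathcal G,\mathcal V,\mathcal P}=\max_{V\in\mathcal V,\pi\in\mathcal P}\min_{g\in\mathcal G}\|g-\mathcal C^\pi_\lambda V\|^2_{2,\mu}$. *)

(* Defs.v *)
From mathcomp Require Import all_boot all_order all_algebra.
From mathcomp Require Import all_classical all_reals all_analysis.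
Set Implicit Arguments. Unset Strict Implicit. Unset Printing Implicit Defensive.
Import Order.TTheory GRing.Theory Num.Theory.
Local Open Scope ring_scope.

Section Defs.
Variables (R : realType) (S A : finType).

Definition Vlmax (Rmax lam gam : R) : R :=
  (Rmax + lam * ln (#|A|%:R)) / (1 - gam).

(* (P V)(s,a) = sum_{s'} P(s'|s,a) V(s');  P s a s' = P(s' | s, a) *)
Definition PV (P : S -> A -> S -> R) (V : S -> R) (s : S) (a : A) : R :=
  \sum_(s' : S) P s a s' * V s'.

(* (C^pi_lambda V)(s,a) = R(s,a) + gamma (P V)(s,a) - lambda ln pi(a|s);
   pi s a = pi(a | s) *)
Definition Cop (Rw : S -> A -> R) (P : S -> A -> S -> R) (gam lam : R)
  (pi : S -> A -> R) (V : S -> R) (s : S) (a : A) : R :=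
  Rw s a + gam * PV P V s a - lam * ln (pi s a).

Definition norm2mu (mu : S -> A -> R) (f : S -> A -> R) : R :=
  Num.sqrt (\sum_(s : S) \sum_(a : A) mu s a * (f s a) ^+ 2).

Definition is_distr_SA (mu : S -> A -> R) : Prop :=
  (forall s a, 0 <= mu s a) /\ \sum_(s : S) \sum_(a : A) mu s a = 1.

Definition is_kernel (P : S -> A -> S -> R) : Prop :=
  forall s a, (forall s', 0 <= P s a s') /\ \sum_(s' : S) P s a s' = 1.

Definition is_policy (pi : S -> A -> R) : Prop :=
  forall s, (forall a, 0 <= pi s a) /\ \sum_(a : A) pi s a = 1.

(* dataset: i-th sample (s_i, a_i, s_i'); reward r_i = R(s_i,a_i) *)
Definition dataset (n : nat) := {ffun 'I_n -> (S * A * S)%type}.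

Definition LD n (D : dataset n) (Rw : S -> A -> R) (gam lam : R)
  (V : S -> R) (pi : S -> A -> R) : R :=
  n%:R^-1 * \sum_(i < n)
    (V (D i).1.1 - Rw (D i).1.1 (D i).1.2 - gam * V (D i).2
       + lam * ln (pi (D i).1.1 (D i).1.2)) ^+ 2.

Definition RD n (D : dataset n) (Rw : S -> A -> R) (gam lam : R)
  (g : S -> A -> R) (V : S -> R) (pi : S -> A -> R) : R :=
  n%:R^-1 * \sum_(i < n)
    (g (D i).1.1 (D i).1.2 - Rw (D i).1.1 (D i).1.2 - gam * V (D i).2
       + lam * ln (pi (D i).1.1 (D i).1.2)) ^+ 2.

Definition sbeed_obj n (D : dataset n) Rw gam lam (IG : finType)
  (fG : IG -> S -> A -> R) (V : S -> R) (pi : S -> A -> R) : \bar R :=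
  \big[Order.max/-oo%E]_(j : IG) (LD D Rw gam lam V pi - RD D Rw gam lam (fG j) V pi)%:E.

Definition is_sbeed_output n (D : dataset n) Rw gam lam
  (IV IP IG : finType) (fV : IV -> S -> R) (fP : IP -> S -> A -> R)
  (fG : IG -> S -> A -> R) (iv : IV) (ip : IP) : Prop :=
  forall (iv' : IV) (ip' : IP),
    (sbeed_obj D Rw gam lam fG (fV iv) (fP ip)
       <= sbeed_obj D Rw gam lam fG (fV iv') (fP ip'))%E.

Definition eps_VP (mu : S -> A -> R) Rw P gam lam (IV IP : finType)
  (fV : IV -> S -> R) (fP : IP -> S -> A -> R) : R :=
  fine (\big[Order.min/+oo%E]_(iv : IV) \big[Order.min/+oo%E]_(ip : IP)
     ((norm2mu mu (fun s a => fV iv s - Cop Rw P gam lam (fP ip) (fV iv) s a)) ^+ 2)%:E).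

Definition eps_GVP (mu : S -> A -> R) Rw P gam lam (IV IP IG : finType)
  (fV : IV -> S -> R) (fP : IP -> S -> A -> R) (fG : IG -> S -> A -> R) : R :=
  fine (\big[Order.max/-oo%E]_(iv : IV) \big[Order.max/-oo%E]_(ip : IP)
     \big[Order.min/+oo%E]_(j : IG)
     ((norm2mu mu (fun s a => fG j s a - Cop Rw P gam lam (fP ip) (fV iv) s a)) ^+ 2)%:E).

Definition data_weight n (mu : S -> A -> R) (P : S -> A -> S -> R) (D : dataset n) : R :=
  \prod_(i < n) (mu (D i).1.1 (D i).1.2 * P (D i).1.1 (D i).1.2 (D i).2).

Definition data_prob n (mu : S -> A -> R) (P : S -> A -> S -> R)
  (E : dataset n -> Prop) : R :=
  \sum_(D : dataset n | `[< E D >]) data_weight mu P D.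

End Defs.

(* Main.v *)
Require Import Defs.
From mathcomp Require Import all_boot all_order all_algebra.
From mathcomp Require Import all_classical all_reals all_analysis.
From mathcomp Require Import ring lra.
Import Order.TTheory GRing.Theory Num.Theory.
Local Open Scope ring_scope.





Section Prob.
Variables (R : realType) (X : finType) (n : nat).

Lemma sum_prod_ffun (F : X -> R) :
  \sum_(D : {ffun 'I_n -> X}) \prod_i F (D i) = (\sum_x F x) ^+ n.
Proof.
by rewrite -(bigA_distr_bigA (fun (_ : 'I_n) x => F x)) /= prodr_const card_ord.
Qed.

Definition dprob (p : X -> R) (E : {ffun 'I_n -> X} -> Prop) : R :=
  \sum_(D : {ffun 'I_n -> X} | `[< E D >]) \prod_i p (D i).

Variable p : X -> R.
Hypothesis p0 : forall x, 0 <= p x.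
Hypothesis p1 : \sum_x p x = 1.

Lemma w_ge0 (D : {ffun 'I_n -> X}) : 0 <= \prod_i p (D i).
Proof. by apply: prodr_ge0. Qed.

Lemma dprob_mono (E E' : {ffun 'I_n -> X} -> Prop) :
  (forall D, E D -> E' D) -> dprob p E <= dprob p E'.
Proof.
move=> H; rewrite /dprob [X in _ <= X]big_mkcond [X in X <= _]big_mkcond /=.
apply: ler_sum => D _; case: (asboolP (E D)) => [ED|_].
  by rewrite (asboolT (H _ ED)).
by case: asboolP => _; [exact: w_ge0|].
Qed.

Lemma dprob_all (E : {ffun 'I_n -> X} -> Prop) :
  (forall D, E D) -> dprob p E = 1.
Proof.
move=> H; rewrite /dprob (eq_bigl xpredT); last by move=> D; apply/asboolP.
by rewrite sum_prod_ffun p1 expr1n.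
Qed.

Lemma dprob_compl (E : {ffun 'I_n -> X} -> Prop) :
  dprob p E = 1 - dprob p (fun D => ~ E D).
Proof.
have tot : \sum_(D : {ffun 'I_n -> X}) \prod_i p (D i) = 1.
  by rewrite sum_prod_ffun p1 expr1n.
move: tot; rewrite (bigID (fun D => `[< E D >])) /=.
have -> : \sum_(D | ~~ `[< E D >]) \prod_i p (D i) = dprob p (fun D => ~ E D).
  apply: eq_bigl => D.
  by apply/negP/asboolP => [H|H]; [move=> ?; apply: H; apply/asboolP|move/asboolP].
rewrite /dprob; move: (\sum_(D | `[< E D >]) _) => a.
move: (\sum_(D | `[< ~ E D >]) _) => b; lra.
Qed.

Lemma dprob_union (K : finType) (B : K -> {ffun 'I_n -> X} -> Prop) :
  dprob p (fun D => exists k, B k D) <= \sum_k dprob p (B k).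
Proof.
rewrite /dprob big_mkcond /=.
under [in X in _ <= X]eq_bigr => k _ do rewrite big_mkcond /=.
rewrite exchange_big /=; apply: ler_sum => D _.
case: asboolP => [[k0 Bk0]|_]; last first.
  by apply: sumr_ge0 => k _; case: asboolP => _ //; exact: w_ge0.
rewrite (bigD1 k0) //= (asboolT Bk0) lerDl.
by apply: sumr_ge0 => k _; case: asboolP => _ //; exact: w_ge0.
Qed.

Lemma dprob_forall (K : finType) (E : K -> {ffun 'I_n -> X} -> Prop) :
  1 - \sum_k dprob p (fun D => ~ E k D) <= dprob p (fun D => forall k, E k D).
Proof.
rewrite dprob_compl lerD2l lerN2.
have := (@dprob_union K (fun k D => ~ E k D)). move=> /= H.
apply: le_trans H.
apply: dprob_mono => D H; apply: contra_notP H => H k.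
by apply: contra_notP H => H; exists k.
Qed.

End Prob.
Arguments dprob {R X} n p E.
Arguments w_ge0 {R X n p}.
Arguments sum_prod_ffun {R X} n F.



Lemma expR_quad (R : realType) (x : R) : x <= 1/2 -> expR x <= 1 + x + 2 * x ^+ 2.
Proof.
move=> hx.
have h1 := expR_ge1Dx (- x); rewrite expRN in h1.
have e0 := expR_gt0 x.
have h2 : (1 - x) * expR x <= 1.
  have hi : expR x * (expR x)^-1 = 1 by rewrite divff // lt0r_neq0.
  nra.
have h3 : 1 <= (1 - x) * (1 + x + 2 * x ^+ 2) by nra.
nra.
Qed.

Section Chernoff.
Variables (R : realType) (X : finType) (n : nat).
Variables (p Z : X -> R) (m s2 b v : R).
Hypothesis p0 : forall x, 0 <= p x.
Hypothesis p1 : \sum_x p x = 1.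
Hypothesis hm : \sum_x p x * Z x = m.
Hypothesis hs : \sum_x p x * Z x ^+ 2 <= s2.
Hypothesis hb : forall x, Z x <= b.
Hypothesis b0 : 0 < b.
Hypothesis v0 : 0 < v.

Lemma chernoff_fin :
  dprob n p (fun D => n%:R * (m + 2 * Num.sqrt (2 * s2 * v) + 4 * b * v)
                      <= \sum_i Z (D i)) <= expR (- (n%:R * v)).
Proof.
have s20 : 0 <= s2.
  apply: le_trans hs; apply: sumr_ge0 => x _; apply: mulr_ge0 => //; exact: sqr_ge0.
set Dd := Num.sqrt (2 * s2 * v) + 2 * b * v.
have sq0 := sqrtr_ge0 (2 * s2 * v).
have bv0 := mulr_gt0 b0 v0.
have Dd0 : 0 < Dd by rewrite /Dd; lra.
have Dd2 : 2 * s2 * v <= Dd ^+ 2.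
  rewrite /Dd -[X in X <= _](@sqr_sqrtr _ (2 * s2 * v)); last first.
    have h := mulr_ge0 s20 (ltW v0); lra.
  apply: lerXn2r; rewrite ?nnegrE; lra.
set th := v / Dd.
have th0 : 0 < th by rewrite /th divr_gt0.
have thD : th * Dd = v by rewrite /th mulfVK // lt0r_neq0.
have thb : th * b <= 1/2.
  have : 2 * b * v <= Dd by rewrite /Dd; nra.
  move=> h; nra.
set T := n%:R * (m + 2 * Dd).
have -> : n%:R * (m + 2 * Num.sqrt (2 * s2 * v) + 4 * b * v) = T.
  by rewrite /T /Dd; congr (_ * _); ring.
(* Markov *)
have step1 : dprob n p (fun D => T <= \sum_i Z (D i)) <=
    \sum_(D : {ffun 'I_n -> X}) \prod_i (p (D i) * expR (th * Z (D i))) * expR (- (th * T)).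
  rewrite /dprob big_mkcond /=; apply: ler_sum => D _.
  rewrite big_split /= -mulrA -expR_sum -expRD.
  have w0 := w_ge0 p0 D.
  case: asboolP => [HT|_]; last by apply: mulr_ge0 => //; exact: expR_ge0.
  rewrite -[X in X <= _]mulr1; apply: ler_wpM2l => //.
  apply: le_trans (expR_ge1Dx _); rewrite lerDl -mulr_sumr -mulrN -mulrDr.
  by apply: mulr_ge0; [exact: ltW|rewrite subr_ge0].
rewrite -mulr_suml (sum_prod_ffun n (fun x => p x * expR (th * Z x))) in step1.
have step2 : \sum_x p x * expR (th * Z x) <= expR (th * m + 2 * th ^+ 2 * s2).
  apply: le_trans (expR_ge1Dx _).
  apply: (@le_trans _ _ (\sum_x (p x + th * (p x * Z x) + 2 * th ^+ 2 * (p x * Z x ^+ 2)))).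
    apply: ler_sum => x _.
    have hx : th * Z x <= 1 / 2 by have := hb x; nra.
    have h := @expR_quad R _ hx; have := p0 x; nra.
  rewrite !big_split /= -!mulr_sumr p1 hm -addrA lerD2l lerD2l.
  by apply: ler_wpM2l => //; nra.
have step3 : (\sum_x p x * expR (th * Z x)) ^+ n <= expR (n%:R * (th * m + 2 * th ^+ 2 * s2)).
  rewrite expRM_natl; apply: lerXn2r => //; rewrite ?nnegrE ?expR_ge0 //.
  by apply: sumr_ge0 => x _; apply: mulr_ge0 => //; exact: expR_ge0.
apply: le_trans step1 _.
apply: le_trans (ler_wpM2r (expR_ge0 _) step3) _.
rewrite -expRD ler_expR /T.
have : 2 * th ^+ 2 * s2 <= v.
  have : 2 * th ^+ 2 * s2 * Dd ^+ 2 <= v * Dd ^+ 2.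
    have -> : 2 * th ^+ 2 * s2 * Dd ^+ 2 = (th * Dd) ^+ 2 * (2 * s2) by ring.
    rewrite thD; have h := ler_wpM2l (ltW v0) Dd2.
    by apply: le_trans h; rewrite le_eqVlt; apply/orP; left; apply/eqP; ring.
  move=> h; have D2 : 0 < Dd ^+ 2 by exact: exprn_gt0.
  by rewrite -(ler_pM2r D2).
have n0 : 0 <= n%:R :> R by [].
move=> h; nra.
Qed.

End Chernoff.



Section RL.
Variables (R : realType) (S A : finType) (gam lam : R).
Variables (P : S -> A -> S -> R) (Rw : S -> A -> R) (mu : S -> A -> R).
Hypothesis hP : is_kernel P.
Hypothesis hmu : is_distr_SA mu.

Definition pw (x : (S * A * S)%type) : R := mu x.1.1 x.1.2 * P x.1.1 x.1.2 x.2.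

Lemma sum_triple (F : (S * A * S)%type -> R) :
  \sum_x F x = \sum_s \sum_a \sum_s' F (s, a, s').
Proof.
symmetry; rewrite pair_bigA /= pair_bigA /=.
by apply: eq_bigr => -[[s a] s'].
Qed.

Lemma pw_ge0 x : 0 <= pw x.
Proof. by rewrite /pw; apply: mulr_ge0; [case: hmu|case: (hP x.1.1 x.1.2)]. Qed.

Lemma sum_pw_sa (c : S -> A -> R) :
  \sum_x pw x * c x.1.1 x.1.2 = \sum_s \sum_a mu s a * c s a.
Proof.
rewrite sum_triple; apply: eq_bigr => s _; apply: eq_bigr => a _ /=.
rewrite /pw /=.
under eq_bigr do rewrite mulrAC.
by rewrite -mulr_sumr (proj2 (hP s a)) mulr1.
Qed.

Lemma pw_sum1 : \sum_x pw x = 1.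
Proof.
have h := sum_pw_sa (fun _ _ => 1).
rewrite (eq_bigr (fun x => pw x * 1)); last by move=> x; rewrite mulr1.
rewrite h -[RHS](proj2 hmu); apply: eq_bigr => s _; apply: eq_bigr => a _.
by rewrite mulr1.
Qed.

Definition yv (V : S -> R) (pi : S -> A -> R) (x : (S * A * S)%type) : R :=
  Rw x.1.1 x.1.2 + gam * V x.2 - lam * ln (pi x.1.1 x.1.2).

Definition Zf V pi (g : S -> A -> R) x : R :=
  (V x.1.1 - yv V pi x) ^+ 2 - (g x.1.1 x.1.2 - yv V pi x) ^+ 2.

Definition Qn (f : S -> A -> R) : R := \sum_s \sum_a mu s a * f s a ^+ 2.

Lemma Qn_ge0 f : 0 <= Qn f.
Proof.
by apply: sumr_ge0 => s _; apply: sumr_ge0 => a _; apply: mulr_ge0;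
  [case: hmu|exact: sqr_ge0].
Qed.

Lemma norm2mu_Qn f : norm2mu mu f = Num.sqrt (Qn f).
Proof. by []. Qed.

Definition Cf V pi := Cop Rw P gam lam pi V.

Lemma mean_Zf V pi g :
  \sum_x pw x * Zf V pi g x =
  Qn (fun s a => V s - Cf V pi s a) - Qn (fun s a => g s a - Cf V pi s a).
Proof.
rewrite /Qn -sumrB sum_triple; apply: eq_bigr => s _.
rewrite -sumrB; apply: eq_bigr => a _ /=.
have e : forall s', pw (s, a, s') * Zf V pi g (s, a, s') =
   mu s a * (P s a s' * (V s ^+ 2 - g s a ^+ 2
        - 2 * (V s - g s a) * (Rw s a - lam * ln (pi s a))))
   + mu s a * (-2 * (V s - g s a) * gam) * (P s a s' * V s').
  by move=> s'; rewrite /pw /Zf /yv /=; ring.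
under eq_bigr do rewrite e.
rewrite big_split /= -!mulr_sumr -mulr_suml (proj2 (hP s a)) mul1r.
by rewrite /Cf /Cop /PV; ring.
Qed.

Lemma LD_RD n (D : dataset S A n) V pi g :
  LD D Rw gam lam V pi - RD D Rw gam lam g V pi =
  n%:R^-1 * \sum_i Zf V pi g (D i).
Proof.
rewrite /LD /RD -mulrBr -sumrB; congr (_ * _); apply: eq_bigr => i _.
by rewrite /Zf /yv; congr (_ - _); congr (_ ^+ 2); ring.
Qed.


Section Bounds.
Variables (M Rmax : R) (V : S -> R) (pi g : S -> A -> R).
Hypothesis hg01 : 0 <= gam < 1.
Hypothesis hR : forall s a, 0 <= Rw s a <= Rmax.
Hypothesis hRM : Rmax <= (1 - gam) * M.
Hypothesis hV : forall s, 0 <= V s <= M.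
Hypothesis hpi : forall s a, `|lam * ln (pi s a)| <= M.
Hypothesis hg : forall s a, 0 <= g s a <= 2 * M.

Lemma y_bounds x : -M <= yv V pi x <= 2 * M.
Proof.
rewrite /yv; have := hR x.1.1 x.1.2; have := hV x.2; have := hpi x.1.1 x.1.2.
case/andP: hg01 => g0 g1.
move=> /ler_normlP [h1 h2] /andP [v0 v1] /andP [r0 r1].
have k1 := mulr_ge0 g0 v0; have k2 := ler_wpM2l g0 v1.
move: (lam * ln (pi x.1.1 x.1.2)) h1 h2 => l h1 h2.
move: (gam * V x.2) k1 k2 => gv k1 k2.
move: (Rw x.1.1 x.1.2) r0 r1 => r r0 r1.
have := hRM. have e : (1 - gam) * M = M - gam * M by ring. move: (gam * M) e k2 => gM e k2 hr. apply/andP; split; lra.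
Qed.

Lemma Zf_fact x : exists a c, Zf V pi g x = a * c /\ a = V x.1.1 - g x.1.1 x.1.2
   /\ a ^+ 2 <= 4 * M ^+ 2 /\ c ^+ 2 <= 25 * M ^+ 2.
Proof.
exists (V x.1.1 - g x.1.1 x.1.2), (V x.1.1 + g x.1.1 x.1.2 - 2 * yv V pi x).
split; first by rewrite /Zf; ring.
split => //.
have := y_bounds x; have := hV x.1.1; have := hg x.1.1 x.1.2.
move=> /andP [g0 g1] /andP [v0 v1] /andP [y0 y1].
split; nra.
Qed.

Lemma Zf_le x : Zf V pi g x <= 10 * M ^+ 2.
Proof.
have [a [c [-> [_ [ha hc]]]]] := Zf_fact x.
have := sqr_ge0 (5 * a - 2 * c); nra.
Qed.

Lemma Zf_ge x : - Zf V pi g x <= 10 * M ^+ 2.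
Proof.
have [a [c [-> [_ [ha hc]]]]] := Zf_fact x.
have := sqr_ge0 (5 * a + 2 * c); nra.
Qed.

Lemma Zf_sq x : Zf V pi g x ^+ 2 <= 25 * M ^+ 2 * (V x.1.1 - g x.1.1 x.1.2) ^+ 2.
Proof.
have [a [c [-> [<- [ha hc]]]]] := Zf_fact x.
rewrite exprMn mulrC; apply: ler_wpM2r => //; exact: sqr_ge0.
Qed.

Lemma Zf_mom2 :
  \sum_x pw x * Zf V pi g x ^+ 2 <= 25 * M ^+ 2 * Qn (fun s a => V s - g s a).
Proof.
rewrite /Qn mulr_sumr.
under [in X in _ <= X]eq_bigr => s _ do rewrite mulr_sumr.
have := sum_pw_sa (fun s a => 25 * M ^+ 2 * (V s - g s a) ^+ 2).
under [in X in _ = X -> _]eq_bigr => s _ do under eq_bigr => a _ do rewrite mulrCA.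
move=> <-; apply: ler_sum => x _; apply: ler_wpM2l; [exact: pw_ge0|exact: Zf_sq].
Qed.

Lemma Qn_diff : Qn (fun s a => V s - g s a) <=
  2 * Qn (fun s a => V s - Cf V pi s a) + 2 * Qn (fun s a => g s a - Cf V pi s a).
Proof.
rewrite /Qn !mulr_sumr -big_split /=; apply: ler_sum => s _.
rewrite !mulr_sumr -big_split /=; apply: ler_sum => a _.
have m0 : 0 <= mu s a by case: hmu.
set u := V s; set w := g s a; set z := Cf V pi s a.
have : (u - w) ^+ 2 <= 2 * (u - z) ^+ 2 + 2 * (w - z) ^+ 2.
  have := sqr_ge0 (u + w - 2 * z); nra.
move=> h; nra.
Qed.

End Bounds.

End RL.



Lemma bigmin_fin_fun (R : realType) (I J : finType) (j0 : J) (r : I -> J -> R) :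
  exists f : I -> J, forall i,
    \big[Order.min/+oo%E]_j ((r i j)%:E : \bar R) = (r i (f i))%:E.
Proof.
have H i : {k : J | k \in xpredT & \big[Order.min/+oo%E]_j ((r i j)%:E : \bar R) = (r i k)%:E}.
  by apply: (@eq_bigmin _ _ J (+oo%E) j0 xpredT (fun j => (r i j)%:E)) => // j _; exact: leey.
by exists (fun i => sval (H i)) => i; case: (H i).
Qed.

Lemma bigmax_fin_fun (R : realType) (I J : finType) (j0 : J) (r : I -> J -> R) :
  exists f : I -> J, forall i,
    \big[Order.max/-oo%E]_j ((r i j)%:E : \bar R) = (r i (f i))%:E.
Proof.
have H i : {k : J | k \in xpredT & \big[Order.max/-oo%E]_j ((r i j)%:E : \bar R) = (r i k)%:E}.
  by apply: (@eq_bigmax _ _ J (-oo%E) j0 xpredT (fun j => (r i j)%:E)) => // j _; exact: leNye.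
by exists (fun i => sval (H i)) => i; case: (H i).
Qed.



Lemma sqrt_le_of (R : realType) (x y : R) : 0 <= y -> x <= y ^+ 2 -> Num.sqrt x <= y.
Proof.
move=> y0 h; rewrite -(ger0_norm y0) -sqrtr_sqr ler_sqrt //; exact: sqr_ge0.
Qed.

Lemma tau_bound (R : realType) (M v Qvg F H : R) : 0 <= v -> 0 <= F -> 0 <= H ->
  Qvg <= 2 * F + 2 * H ->
  2 * Num.sqrt (2 * (25 * M ^+ 2 * Qvg) * v) + 4 * (10 * M ^+ 2) * v <=
  20 * Num.sqrt (M ^+ 2 * v) * (Num.sqrt F + Num.sqrt H)
  + 40 * Num.sqrt (M ^+ 2 * v) ^+ 2.
Proof.
move=> v0 F0 H0 hQ.
have u0 : 0 <= M ^+ 2 * v by apply: mulr_ge0 => //; exact: sqr_ge0.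
have pe := sqr_sqrtr u0.
have Fe := sqr_sqrtr F0; have He := sqr_sqrtr H0.
have p0 := sqrtr_ge0 (M ^+ 2 * v).
have a0 := sqrtr_ge0 F; have b0 := sqrtr_ge0 H.
move: (Num.sqrt (M ^+ 2 * v)) pe p0 => p pe p0.
move: (Num.sqrt F) Fe a0 => a Fe a0.
move: (Num.sqrt H) He b0 => b He b0.
have hs : Num.sqrt (2 * (25 * M ^+ 2 * Qvg) * v) <= 10 * p * (a + b).
  apply: sqrt_le_of; first by apply: mulr_ge0 => //; lra.
  have e : 2 * (25 * M ^+ 2 * Qvg) * v = 50 * (M ^+ 2 * v) * Qvg by ring.
  rewrite e -pe.
  have hab := mulr_ge0 a0 b0.
  have h1 : Qvg <= 2 * a ^+ 2 + 2 * b ^+ 2 by rewrite Fe He.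
  have h2 := sqr_ge0 p.
  have h3 : 50 * p ^+ 2 * Qvg <= 50 * p ^+ 2 * (2 * a ^+ 2 + 2 * b ^+ 2).
    by apply: ler_wpM2l => //; lra.
  apply: le_trans h3 _.
  have -> : (10 * p * (a + b)) ^+ 2 = 50 * p ^+ 2 * (2 * a ^+ 2 + 2 * b ^+ 2)
     + 200 * p ^+ 2 * (a * b) by ring.
  by rewrite lerDl; apply: mulr_ge0 => //; lra.
have e2 : 4 * (10 * M ^+ 2) * v = 40 * p ^+ 2 by rewrite pe; ring.
rewrite e2; lra.
Qed.

Lemma final_alg (R : realType) (a b g p x : R) : 0 <= a -> 0 <= b -> 0 <= g -> 0 <= p ->
  a ^+ 2 - b ^+ 2 - (20 * p * (a + b) + 40 * p ^+ 2) <= x ->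
  x <= g ^+ 2 + 20 * p * g + 140 * p ^+ 2 -> a <= 30 * (b + g + p).
Proof.
move=> a0 b0 g0 p0 h1 h2.
have h : a ^+ 2 <= b ^+ 2 + 20 * p * (a + b) + 180 * p ^+ 2 + g ^+ 2 + 20 * p * g by lra.
rewrite leNgt; apply/negP => hc.
set s := b + g + p.
have s0 : 0 <= s by rewrite /s; lra.
have hs : b ^+ 2 + 20 * p * (a + b) + 180 * p ^+ 2 + g ^+ 2 + 20 * p * g
           <= 20 * s * a + 201 * s ^+ 2.
  rewrite /s; nra.
have : 30 * s * a < a ^+ 2 by nra.
nra.
Qed.

Lemma upper_alg (R : realType) (g e p : R) :
  g ^+ 2 - e ^+ 2 + (20 * p * (g + e) + 40 * p ^+ 2) <= g ^+ 2 + 20 * p * g + 140 * p ^+ 2.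
Proof. have := sqr_ge0 (e - 10 * p); nra. Qed.

Theorem mainTheorem9 (R : realType) :
  exists c : R, 0 < c /\
  forall (S A : finType) (gam lam Rmax : R)
    (P : S -> A -> S -> R) (Rw : S -> A -> R) (mu : S -> A -> R)
    (IV IP IG : finType)
    (fV : IV -> S -> R) (fP : IP -> S -> A -> R) (fG : IG -> S -> A -> R)
    (n : nat) (delta : R),
  0 <= gam < 1 -> 0 < lam ->
  is_kernel P ->
  (forall s a, 0 <= Rw s a <= Rmax) ->
  is_distr_SA mu ->
  injective fV -> injective fP -> injective fG ->
  (0 < #|IV|)%N -> (0 < #|IP|)%N -> (0 < #|IG|)%N ->
  (forall iv s, 0 <= fV iv s <= Vlmax A Rmax lam gam) ->
  (forall ip, is_policy (fP ip)) ->
  (forall ip s a, 0 < fP ip s a /\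
     `|ln (fP ip s a)| <= Vlmax A Rmax lam gam / lam) ->
  (forall j s a, 0 <= fG j s a <= 2 * Vlmax A Rmax lam gam) ->
  (0 < n)%N ->
  0 < delta < 1 ->
  let Vm := Vlmax A Rmax lam gam in
  let iota := Vm ^+ 2 * ln ((#|IV| * #|IP| * #|IG|)%:R / delta) in
  let jmath := Vm ^+ 2 * ln ((#|IV| * #|IP|)%:R / delta) in
  let eVP := eps_VP mu Rw P gam lam fV fP in
  let eGVP := eps_GVP mu Rw P gam lam fV fP fG in
  1 - 4 * delta <=
  data_prob mu P (fun D : dataset S A n =>
    forall (iv : IV) (ip : IP),
      is_sbeed_output D Rw gam lam fV fP fG iv ip ->
      norm2mu mu (fun s a => fV iv s - Cop Rw P gam lam (fP ip) (fV iv) s a)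
      <= c * (Num.sqrt (jmath / n%:R) + Num.sqrt eVP
              + Num.sqrt (Num.sqrt (jmath / n%:R * eVP))
              + Num.sqrt eGVP
              + Num.sqrt (Num.sqrt (iota / n%:R * eGVP))
              + Num.sqrt (iota / n%:R))).
Proof.
exists 30; split; first lra.
move=> S A gam lam Rmax P Rw mu IV IP IG fV fP fG n delta hgam hlam hP hR hmu
  _ _ _ hIV hIP hIG hV _ hpi hG hn hdel.
cbv zeta.
set Vm := Vlmax A Rmax lam gam in hV hpi hG *.
set eVP := eps_VP mu Rw P gam lam fV fP.
set eGVP := eps_GVP mu Rw P gam lam fV fP fG.
have hRM : Rmax <= (1 - gam) * Vm.
  have lnA : 0 <= ln (#|A|%:R : R).
    case: (posnP #|A|) => [->|h]; first by rewrite ln0.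
    by apply: ln_ge0; rewrite ler1n.
  case/andP: hgam => g0 g1.
  have e : (1 - gam) * Vm = Rmax + lam * ln (#|A|%:R : R).
    by rewrite /Vm /Vlmax mulrC divfK // subr_eq0 gt_eqF.
  rewrite e; have := mulr_ge0 (ltW hlam) lnA; lra.
have hpi' : forall ip s a, `|lam * ln (fP ip s a)| <= Vm.
  move=> ip s a; have [_ h] := hpi ip s a.
  rewrite normrM (gtr0_norm hlam).
  have -> : Vm = lam * (Vm / lam) by rewrite mulrC divfK // gt_eqF.
  by apply: ler_wpM2l => //; exact: ltW.
have dpE : forall E, data_prob mu P E = dprob n (pw R S A P mu) E by [].
rewrite dpE.
have rhs0 : forall (x1 x2 x3 x4 x5 x6 : R), 0 <= 30 * (Num.sqrt x1 + Num.sqrt x2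
   + Num.sqrt x3 + Num.sqrt x4 + Num.sqrt x5 + Num.sqrt x6).
  by move=> *; rewrite mulr_ge0 // !addr_ge0 // sqrtr_ge0.
case: (lerP Vm 0) => hM.
  rewrite (dprob_all _ _ _ _ (pw_sum1 _ _ _ _ _ hP hmu)); first lra.
  move=> D iv ip _.
  have z : forall iv s, fV iv s = 0.
    by move=> iv' s; have := hV iv' s; case/andP => h1 h2; lra.
  have ez : forall s a, fV iv s - Cop Rw P gam lam (fP ip) (fV iv) s a = 0.
    move=> s a; rewrite /Cop /PV z.
    have -> : \sum_s' P s a s' * fV iv s' = 0 by rewrite big1 // => s' _; rewrite z mulr0.
    have := hpi' ip s a; have := hR s a; case/andP: hgam => g0 g1.
    case/andP => r0 r1; move: (lam * ln (fP ip s a)) => l hl.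
    have hl' : l = 0 by apply/eqP; rewrite -normr_le0; lra.
    have : Rmax <= 0 by nra.
    move=> hr; rewrite hl'; lra.
  under eq_fun do under eq_fun do rewrite ez.
  rewrite /norm2mu big1 ?sqrtr0 //.
  by move=> s _; rewrite big1 // => a _; rewrite expr0n mulr0.

have hN1 : 1 <= ((#|IV| * #|IP| * #|IG|)%:R : R).
  by rewrite ler1n !muln_gt0 hIV hIP hIG.
set N : R := ((#|IV| * #|IP| * #|IG|)%:R : R).
case/andP: hdel => d0 d1.
have Nd1 : 1 < N / delta by rewrite ltr_pdivlMr // mul1r; lra.
set L := ln (N / delta).
have L0 : 0 < L by apply: ln_gt0.
have n0 : (0 : R) < n%:R by rewrite ltr0n.
set v := L / n%:R.
have v0 : 0 < v by rewrite /v divr_gt0.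
have eL : expR (- (n%:R * v)) = delta / N.
  have -> : n%:R * v = L by rewrite /v mulrC divfK // gt_eqF.
  rewrite expRN /L lnK ?invf_div // posrE; lra.
have b0 : 0 < 10 * Vm ^+ 2 by rewrite mulr_gt0 // exprn_gt0.
pose C (iv : IV) (ip : IP) := Cf R S A gam lam P Rw (fV iv) (fP ip).
pose Zt (iv : IV) (ip : IP) (j : IG) := Zf R S A gam lam Rw (fV iv) (fP ip) (fG j).
pose mt (iv : IV) (ip : IP) (j : IG) := Qn R S A mu (fun s a => fV iv s - C iv ip s a)
                 - Qn R S A mu (fun s a => fG j s a - C iv ip s a).
pose s2t (iv : IV) (ip : IP) (j : IG) := 25 * Vm ^+ 2 * Qn R S A mu (fun s a => fV iv s - fG j s a).
pose E (k : (IV * IP * IG * bool)%type) (D : dataset S A n) :=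
  let: (iv, ip, j, sg) := k in
  if sg then \sum_i Zt iv ip j (D i) <
     n%:R * (mt iv ip j + 2 * Num.sqrt (2 * s2t iv ip j * v) + 4 * (10 * Vm ^+ 2) * v)
  else \sum_i (- Zt iv ip j (D i)) <
     n%:R * (- mt iv ip j + 2 * Num.sqrt (2 * s2t iv ip j * v) + 4 * (10 * Vm ^+ 2) * v).
have hbad : forall k, dprob n (pw R S A P mu) (fun D => ~ E k D) <= delta / N.
  case=> [[[iv ip] j] sg]; rewrite -eL.
  have hmZ := mean_Zf _ _ _ gam lam P Rw mu hP (fV iv) (fP ip) (fG j).
  have hsZ := Zf_mom2 _ _ _ gam lam P Rw mu hP hmu Vm Rmax (fV iv) (fP ip) (fG j)
     hgam hR hRM (hV iv) (hpi' ip) (hG j).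
  case: sg => /=.
    have hb := (Zf_le _ _ _ gam lam Rw Vm Rmax (fV iv) (fP ip) (fG j)
         hgam hR hRM (hV iv) (hpi' ip) (hG j)).
    have ch := (chernoff_fin _ _ n _ (Zt iv ip j) (mt iv ip j) (s2t iv ip j) _ v
         (pw_ge0 _ _ _ _ _ hP hmu) (pw_sum1 _ _ _ _ _ hP hmu) hmZ hsZ hb b0 v0).
    apply: le_trans ch; apply: dprob_mono; first exact: (pw_ge0 _ _ _ _ _ hP hmu).
    by move=> D /negP; rewrite -leNgt.
  apply: le_trans; last first.
    apply: (chernoff_fin _ _ _ _ (fun x => - Zt iv ip j x) (- mt iv ip j) (s2t iv ip j) _ v
       (pw_ge0 _ _ _ _ _ hP hmu) (pw_sum1 _ _ _ _ _ hP hmu) _ _ _ b0 v0).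
    - by under eq_bigr do rewrite mulrN; rewrite sumrN hmZ.
    - by under eq_bigr do rewrite sqrrN.
    exact: (Zf_ge _ _ _ gam lam Rw Vm Rmax (fV iv) (fP ip) (fG j)
         hgam hR hRM (hV iv) (hpi' ip) (hG j)).
  apply: dprob_mono; first exact: (pw_ge0 _ _ _ _ _ hP hmu).
  by move=> D /negP; rewrite -leNgt.
have hgood : 1 - 2 * delta <= dprob n (pw R S A P mu) (fun D => forall k, E k D).
  apply: le_trans (dprob_forall _ _ _ _ (pw_ge0 _ _ _ _ _ hP hmu) (pw_sum1 _ _ _ _ _ hP hmu) _ E).
  rewrite lerD2l lerN2.
  apply: le_trans (ler_sum _ (fun k _ => hbad k)) _.
  rewrite sumr_const !card_prod card_bool mulrnA -[_ *+ (_ * _ * _)%N]mulr_natr -/N divfK; last by rewrite gt_eqF //; lra.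
  by rewrite mulr2n; lra.
apply: (@le_trans _ _ (1 - 2 * delta)); first lra.
apply: (le_trans hgood); apply: dprob_mono; first exact: (pw_ge0 _ _ _ _ _ hP hmu).
move=> D HE iv ip Hout.
have p0 : 0 <= Num.sqrt (Vm ^+ 2 * v) by exact: sqrtr_ge0.
have pe : Num.sqrt (Vm ^+ 2 * v) ^+ 2 = Vm ^+ 2 * v.
  by rewrite sqr_sqrtr // mulr_ge0 ?sqr_ge0 // ltW.
set p := Num.sqrt (Vm ^+ 2 * v).
pose nF (iv : IV) (ip : IP) :=
  norm2mu mu (fun s a => fV iv s - Cop Rw P gam lam (fP ip) (fV iv) s a).
pose nH (iv : IV) (ip : IP) (j : IG) :=
  norm2mu mu (fun s a => fG j s a - Cop Rw P gam lam (fP ip) (fV iv) s a).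
pose x (iv : IV) (ip : IP) (j : IG) :=
  LD D Rw gam lam (fV iv) (fP ip) - RD D Rw gam lam (fG j) (fV iv) (fP ip).
have nF0 : forall iv ip, 0 <= nF iv ip by move=> *; exact: sqrtr_ge0.
have nH0 : forall iv ip j, 0 <= nH iv ip j by move=> *; exact: sqrtr_ge0.
have nFe : forall iv ip, nF iv ip ^+ 2 = Qn R S A mu (fun s a => fV iv s - C iv ip s a).
  by move=> *; rewrite /nF norm2mu_Qn sqr_sqrtr // Qn_ge0.
have nHe : forall iv ip j, nH iv ip j ^+ 2 = Qn R S A mu (fun s a => fG j s a - C iv ip s a).
  by move=> *; rewrite /nH norm2mu_Qn sqr_sqrtr // Qn_ge0.
have tb : forall iv ip j,
    2 * Num.sqrt (2 * s2t iv ip j * v) + 4 * (10 * Vm ^+ 2) * v <=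
    20 * p * (nF iv ip + nH iv ip j) + 40 * p ^+ 2.
  move=> iv' ip' j.
  apply: (tau_bound _ Vm v _ _ _ (ltW v0) (Qn_ge0 _ _ _ _ hmu _) (Qn_ge0 _ _ _ _ hmu _)).
  exact: (Qn_diff _ _ _ gam lam P Rw mu hmu (fV iv') (fP ip') (fG j)).
have kup : forall iv ip j, x iv ip j <
    nF iv ip ^+ 2 - nH iv ip j ^+ 2 + (20 * p * (nF iv ip + nH iv ip j) + 40 * p ^+ 2).
  move=> iv' ip' j; have := HE (iv', ip', j, true) => /= h.
  rewrite /x LD_RD ltr_pdivrMl // nFe nHe.
  apply: (lt_le_trans h); rewrite -/(mt iv' ip' j) -addrA ler_wpM2l ?ler0n //.
  by rewrite lerD2l; exact: tb.
have klo : forall iv ip j,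
    nF iv ip ^+ 2 - nH iv ip j ^+ 2 - (20 * p * (nF iv ip + nH iv ip j) + 40 * p ^+ 2)
    < x iv ip j.
  move=> iv' ip' j; have := HE (iv', ip', j, false) => /= h.
  rewrite sumrN in h.
  rewrite /x LD_RD ltr_pdivlMl // nFe nHe -/(mt iv' ip' j).
  have := tb iv' ip' j; move: h.
  move: (\sum_i Zt iv' ip' j (D i)) (mt iv' ip' j) (2 * Num.sqrt (2 * s2t iv' ip' j * v))
     (20 * p * (nF iv' ip' + nH iv' ip' j) + 40 * p ^+ 2) => z m t1 t2 h1 h2.
  have nn : 0 <= n%:R :> R by exact: ltW.
  have := ler_wpM2l nn h2; nra.
case/card_gt0P: hIP => ip0 _; case/card_gt0P: hIV => iv0 _.
case/card_gt0P: hIG => j0 _.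
have [ipf hipf] := bigmin_fin_fun _ IV IP ip0 (fun iv ip => nF iv ip ^+ 2).
have [ivs hivs] := bigmin_fin_fun _ unit IV iv0 (fun _ iv => nF iv (ipf iv) ^+ 2).
have eVPe : eVP = nF (ivs tt) (ipf (ivs tt)) ^+ 2.
  rewrite /eVP /eps_VP (eq_bigr (fun iv => (nF iv (ipf iv) ^+ 2)%:E)); last first.
    by move=> iv' _; rewrite -hipf.
  by rewrite (hivs tt).
have [jf hjf] := bigmin_fin_fun _ (IV * IP)%type IG j0 (fun k j => nH k.1 k.2 j ^+ 2).
have [ipg hipg] := bigmax_fin_fun _ IV IP ip0 (fun iv ip => nH iv ip (jf (iv, ip)) ^+ 2).
have [ivg hivg] := bigmax_fin_fun _ unit IV iv0
   (fun _ iv => nH iv (ipg iv) (jf (iv, ipg iv)) ^+ 2).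
have eGVPe : eGVP = nH (ivg tt) (ipg (ivg tt)) (jf (ivg tt, ipg (ivg tt))) ^+ 2.
  rewrite /eGVP /eps_GVP.
  rewrite (eq_bigr (fun iv => (nH iv (ipg iv) (jf (iv, ipg iv)) ^+ 2)%:E)); last first.
    move=> iv' _; rewrite -hipg; apply: eq_bigr => ip' _.
    by rewrite -(hjf (iv', ip')).
  by rewrite (hivg tt).
set jt := jf (iv, ip).
have hjt : forall j, nH iv ip jt ^+ 2 <= nH iv ip j ^+ 2.
  move=> j; have := bigmin_le (+oo%E) j (fun j => (nH iv ip j ^+ 2)%:E : \bar R).
  by rewrite -/(nH _ _ _) (hjf (iv, ip)) lee_fin.
have hGe : nH iv ip jt ^+ 2 <= eGVP.
  rewrite eGVPe.
  have h1 := le_bigmax (-oo%E) (fun ip' => (nH iv ip' (jf (iv, ip')) ^+ 2)%:E : \bar R) ip.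
  rewrite (hipg iv) lee_fin /= in h1.
  have h2 := le_bigmax (-oo%E) (fun iv' => (nH iv' (ipg iv') (jf (iv', ipg iv')) ^+ 2)%:E : \bar R) iv.
  rewrite (hivg tt) lee_fin /= in h2.
  exact: le_trans h1 h2.
set ivS := ivs tt; set ipS := ipf ivS.
set gS := nF ivS ipS.
have hx : x iv ip jt <= gS ^+ 2 + 20 * p * gS + 140 * p ^+ 2.
  have o1 := le_bigmax (-oo%E)
     (fun j => ((x iv ip j)%:E : \bar R)) jt.
  have o2 := Hout ivS ipS.
  have o3 : (sbeed_obj D Rw gam lam fG (fV ivS) (fP ipS) <=
            ((gS ^+ 2 + 20 * p * gS + 140 * p ^+ 2)%:E : \bar R))%E.
    apply: bigmax_le; first exact: leNye.
    move=> j _; rewrite lee_fin; apply: ltW; apply: (lt_le_trans (kup ivS ipS j)).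
    exact: upper_alg.
  rewrite -lee_fin; apply: le_trans o3; apply: le_trans o2; exact: o1.
have ha := final_alg _ _ _ _ _ _ (nF0 iv ip) (nH0 iv ip jt) (nF0 ivS ipS) p0
   (ltW (klo iv ip jt)) hx.
have e1 : Num.sqrt eVP = gS by rewrite eVPe sqrtr_sqr ger0_norm //; exact: nF0.
have e2 : nH iv ip jt <= Num.sqrt eGVP.
  rewrite -(ger0_norm (nH0 iv ip jt)) -sqrtr_sqr ler_sqrt //.
  apply: le_trans hGe; exact: sqr_ge0.
have e3 : Num.sqrt (Vm ^+ 2 * L / n%:R) = p by rewrite /p /v mulrA.
rewrite -/(nF iv ip) e1 e3.
have := sqrtr_ge0 (Vm ^+ 2 * ln ((#|IV| * #|IP|)%:R / delta) / n%:R).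
have := sqrtr_ge0 (Num.sqrt (Vm ^+ 2 * ln ((#|IV| * #|IP|)%:R / delta) / n%:R * eVP)).
have := sqrtr_ge0 (Num.sqrt (Vm ^+ 2 * L / n%:R * eGVP)).
rewrite -/p -/gS in ha. move=> h1 h2 h3; lra.
Qed.
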